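(* Let $n$ be a positive integer and let $\mathcal F$ be an $\mathcal N$-saturated family of subsets of $[n]$. Let $A'\subseteq[n]$ with $A'\notin\mathcal F$, and suppose there exists $A\in\mathcal F$ with $A'\subset A$, and that $A'$ is a maximal element of some induced copy of $\mathcal N$ in $\mathcal F\cup\{A'\}$. Then there exists an induced copy of $\mathcal N$ in $\mathcal F\cup\{A'\}$ in which $A'$ is a maximal element and the other maximal element is a subset of $A$.
   Context: The poset $\mathcal N$ has four elements $a,b,c,d$ with $a<c$, $b<c$, $b<d$ and no other comparabilities (so $a,b$ are its minimal elements and $c,d$ its maximal elements). A family $\mathcal Q$ of sets (ordered by inclusion) contains an induced copy of $\mathcal N$ if there are distinct sets in $\mathcal Q$ whose inclusion relations are exactly those of $a,b,c,d$ above. A family $\mathcal F$ of subsets of $[n]=\{1,\dots,n\}$ is $\mathcal N$-saturated if $\mathcal F$ contains no induced copy of $\mathcal N$, but for every $S\subseteq[n]$ with $S\notin\mathcal F$, the family $\mathcal F\cup\{S\}$ contains an induced copy of $\mathcal N$. *)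

(* Defs.v *)
From mathcomp Require Import all_boot.
Set Implicit Arguments. Unset Strict Implicit. Unset Printing Implicit Defensive.

Definition comparableS (n : nat) (x y : {set 'I_n}) : bool :=
  (x \subset y) || (y \subset x).

Definition inducedN (n : nat) (a b c d : {set 'I_n}) : Prop :=
  [/\ uniq [:: a; b; c; d],
      a \proper c, b \proper c, b \proper d &
      [/\ ~~ comparableS a b, ~~ comparableS a d & ~~ comparableS c d]].

(* Q contains an induced copy of N with sets a,b,c,d (c,d maximal). *)
Definition copyN (n : nat) (Q : {set {set 'I_n}}) (a b c d : {set 'I_n}) : Prop :=
  [/\ a \in Q, b \in Q, c \in Q, d \in Q & inducedN a b c d].

Definition containsN (n : nat) (Q : {set {set 'I_n}}) : Prop :=
  exists a b c d, copyN Q a b c d.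

Definition N_saturated (n : nat) (F : {set {set 'I_n}}) : Prop :=
  ~ containsN F /\ forall S : {set 'I_n}, S \notin F -> containsN (S |: F).

(* Main.v *)
Require Import Defs.
From mathcomp Require Import all_boot.


Lemma mkN {n} {a b c d : {set 'I_n}} :
  a \proper c -> b \proper c -> b \proper d ->
  ~~ (a \subset b) -> ~~ (b \subset a) -> ~~ (a \subset d) -> ~~ (d \subset a) ->
  ~~ (c \subset d) -> ~~ (d \subset c) -> inducedN a b c d.
Proof.
move=> ac bc bd nab nba nad nda ncd ndc.
have nprop : forall x y : {set 'I_n}, x \proper y -> x != y.
  by move=> x y; apply: contraTneq => ->; rewrite properE subxx.
have ninc : forall x y : {set 'I_n}, ~~ (x \subset y) -> x != y.
  by move=> x y; apply: contraNneq => ->; rewrite subxx.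
split; rewrite /comparableS ?negb_or ?nab ?nba ?nad ?nda ?ncd ?ndc //.
rewrite /= !inE !negb_or.
by rewrite (ninc _ _ nab) (nprop _ _ ac) (ninc _ _ nad) (nprop _ _ bc)
   (nprop _ _ bd) (ninc _ _ ncd).
Qed.

Lemma Ninv {n} {a b c d : {set 'I_n}} : inducedN a b c d ->
  [/\ [/\ a \subset c, b \subset c & b \subset d],
      [/\ ~~ (c \subset a), ~~ (c \subset b) & ~~ (d \subset b)],
      [/\ ~~ (a \subset b), ~~ (b \subset a) & ~~ (a \subset d)] &
      [/\ ~~ (d \subset a), ~~ (c \subset d) & ~~ (d \subset c)]].
Proof.
case=> _; rewrite !properE /comparableS.
move=> /andP[-> ->] /andP[-> ->] /andP[-> ->].
by rewrite !negb_or => -[/andP[-> ->] /andP[-> ->] /andP[-> ->]].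
Qed.

Lemma Nuniq {n} {a b c d : {set 'I_n}} : inducedN a b c d ->
  [/\ a != b, a != c, a != d & [/\ b != c, b != d & c != d]].
Proof.
case=> /= u _ _ _ _; move: u; rewrite !inE !negb_or.
by case/and4P => /and3P[-> -> ->] /andP[-> ->] -> _.
Qed.

Lemma noN {n} {F : {set {set 'I_n}}} {a b c d : {set 'I_n}} : ~ containsN F -> a \in F -> b \in F -> c \in F -> d \in F ->
  inducedN a b c d -> False.
Proof. by move=> H ha hb hc hd hN; apply: H; exists a, b, c, d. Qed.

Lemma inU1 {n} {X : {set 'I_n}} {F : {set {set 'I_n}}} {x} : x \in X |: F -> x != X -> x \in F.
Proof. by rewrite in_setU1 => /orP[/eqP -> | //]; rewrite eqxx. Qed.


Theorem lemma3p1 (n : nat) (F : {set {set 'I_n}}) (A' A : {set 'I_n}) :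
  0 < n ->
  N_saturated F ->
  A' \notin F ->
  A \in F -> A' \proper A ->
  (exists a b c d, copyN (A' |: F) a b c d /\ (c = A' \/ d = A')) ->
  exists a b c d, copyN (A' |: F) a b c d /\
    ((c = A' /\ d \subset A) \/ (d = A' /\ c \subset A)).
Proof.
move=> _ [NF sat] A'F AF A'A [a [b [c [d [[ha hb hc hd Hi] Hcd]]]]].
have [[ac bc bd] [nca ncb ndb] [nab nba nad] [nda ncd ndc]] := Ninv Hi.
have [neab neac nead [nebc nebd necd]] := Nuniq Hi.
have /andP[A'sA nAA'] : (A' \subset A) && ~~ (A \subset A') by rewrite -properE.
case: Hcd => [Ec | Ed].
-
  subst c.
  have aF := inU1 ha neac. have bF := inU1 hb nebc.
  have dF : d \in F by apply: (inU1 hd); rewrite eq_sym.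
  case dA: (d \subset A).
    by exists a, b, A', d; split=> //; left.
  exfalso.
  have nAd : ~~ (A \subset d).
    by apply/negP => Ad; move/negP: ncd; apply; apply: subset_trans A'sA Ad.
  apply: (noN NF aF bF AF dF); apply: mkN => //.
  + by apply: (sub_proper_trans ac); rewrite properE A'sA.
  + by apply: (sub_proper_trans bc); rewrite properE A'sA.
  + by rewrite properE bd.
  + by rewrite dA.
- subst d.
  have aF := inU1 ha nead. have bF := inU1 hb nebd. have cF := inU1 hc necd.
  case cA: (c \subset A).
    by exists a, b, c, A'; split=> //; right.
  have aA : a \subset A.
    apply/negPn/negP => naA.
    have nAa : ~~ (A \subset a).
      by apply/negP => Aa; move/negP: nda; apply; apply: subset_trans A'sA Aa.
    have nAc : ~~ (A \subset c).
      by apply/negP => Ac; move/negP: ndc; apply; apply: subset_trans A'sA Ac.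
    apply: (noN NF aF bF cF AF); apply: mkN => //.
    + by rewrite properE ac.
    + by rewrite properE bc.
    + by apply: (sub_proper_trans bd A'A).
    + by rewrite cA.
  have bA : b \subset A by apply: subset_trans bd A'sA.
  pose Z := \bigcap_(y | (y \in F) && (a \subset y) && (b \subset y)) y.
  have ZU : forall y, y \in F -> a \subset y -> b \subset y -> Z \subset y.
    by move=> y h1 h2 h3; apply: bigcap_inf; rewrite h1 h2 h3.
  have aZ : a \subset Z by apply/bigcapsP => y /andP[/andP[_ ->]].
  have bZ : b \subset Z by apply/bigcapsP => y /andP[_ ->].
  have ZW : forall s : {set 'I_n}, ~~ (s \subset Z) ->
      exists2 y, y \in F & [/\ a \subset y, b \subset y & ~~ (s \subset y)].
    move=> s nsZ.
    case: (boolP [exists y, [&& y \in F, a \subset y, b \subset y & ~~ (s \subset y)]]).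
      by case/existsP => y /and4P[h1 h2 h3 h4]; exists y.
    move/existsPn => H; exfalso; move/negP: nsZ; apply; apply/bigcapsP => y.
    case/andP=> /andP[h1 h2] h3; move: (H y); rewrite h1 h2 h3 /=.
    by rewrite negbK.
  have Zc : Z \subset c by apply: ZU.
  have nA'Z : ~~ (A' \subset Z).
    by apply/negP => h; move/negP: ndc; apply; apply: subset_trans h Zc.
  have nZA' : ~~ (Z \subset A').
    by apply/negP => h; move/negP: nad; apply; apply: subset_trans aZ h.
  have nZa : ~~ (Z \subset a).
    by apply/negP => h; move/negP: nba; apply; apply: subset_trans bZ h.
  have nZb : ~~ (Z \subset b).
    by apply/negP => h; move/negP: nab; apply; apply: subset_trans aZ h.
  case ZF: (Z \in F).
    exists a, b, Z, A'; split; last by right; split=> //; apply: ZU.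
    split; rewrite ?setU11 ?setU1r //.
    apply: mkN => //; by rewrite properE ?aZ ?bZ ?bd ?nZa ?nZb ?ndb.
  exfalso.
  have [p [q [r [s [hp hq hr hs Hi2]]]]] := sat Z (negbT ZF).
  have [[pr qr qs] [nrp nrq nsq] [npq nqp nps] [nsp nrs nsr]] := Ninv Hi2.
  have [nepq nepr neps [neqr neqs ners]] := Nuniq Hi2.
  have prop2 : forall x y : {set 'I_n}, x \subset y -> ~~ (y \subset x) -> x \proper y.
    by move=> x y h1 h2; rewrite properE h1 h2.
  case: (eqVneq p Z) => [Ep | npZ].
    subst p.
    have qF : q \in F by apply: (inU1 hq); rewrite eq_sym.
    have rF : r \in F by apply: (inU1 hr); rewrite eq_sym.
    have sF : s \in F by apply: (inU1 hs); rewrite eq_sym.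
    have sub_s : forall x, x \in F -> x \subset Z -> x \subset s.
      move=> x xF xZ; apply/negPn/negP => nxs.
      have nsx : ~~ (s \subset x).
        by apply/negP => h; move/negP: nsp; apply; apply: subset_trans h xZ.
      have nxq : ~~ (x \subset q).
        by apply/negP => h; move/negP: nxs; apply; apply: subset_trans h qs.
      have nqx : ~~ (q \subset x).
        by apply/negP => h; move/negP: nqp; apply; apply: subset_trans h xZ.
      apply: (noN NF xF qF rF sF); apply: mkN => //.
      + by apply: (sub_proper_trans xZ); apply: prop2.
      + exact: prop2.
      + exact: prop2.
    by move/negP: nps; apply; apply: ZU => //; apply: sub_s.
  case: (eqVneq q Z) => [Eq | nqZ].
    subst q.
    have pF : p \in F by apply: (inU1 hp).
    have rF : r \in F by apply: (inU1 hr); rewrite eq_sym.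
    have sF : s \in F by apply: (inU1 hs); rewrite eq_sym.
    have sub_p : forall x, x \in F -> x \subset Z -> x \subset p.
      move=> x xF xZ; apply/negPn/negP => nxp.
      have npx : ~~ (p \subset x).
        by apply/negP => h; move/negP: npq; apply; apply: subset_trans h xZ.
      apply: (noN NF pF xF rF sF); apply: mkN => //.
      + exact: prop2.
      + by apply: (sub_proper_trans xZ); apply: prop2.
      + by apply: (sub_proper_trans xZ); apply: prop2.
    by move/negP: nqp; apply; apply: ZU => //; apply: sub_p.
  case: (eqVneq r Z) => [Er | nrZ].
    subst r.
    have pF : p \in F by apply: (inU1 hp).
    have qF : q \in F by apply: (inU1 hq).
    have sF : s \in F by apply: (inU1 hs); rewrite eq_sym.
    have [y yF [ay by_ nsy]] := ZW s nsr.
    have Zy := ZU y yF ay by_.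
    have nys : ~~ (y \subset s).
      by apply/negP => h; move/negP: nrs; apply; apply: subset_trans Zy h.
    apply: (noN NF pF qF yF sF); apply: mkN => //.
    + by apply: (proper_sub_trans _ Zy); apply: prop2.
    + by apply: (proper_sub_trans _ Zy); apply: prop2.
    + exact: prop2.
  case: (eqVneq s Z) => [Es | nsZ].
    subst s.
    have pF : p \in F by apply: (inU1 hp).
    have qF : q \in F by apply: (inU1 hq).
    have rF : r \in F by apply: (inU1 hr).
    have [y yF [ay by_ npy]] := ZW p nps.
    have Zy := ZU y yF ay by_.
    have nyp : ~~ (y \subset p).
      by apply/negP => h; move/negP: nsp; apply; apply: subset_trans Zy h.
    have nry : ~~ (r \subset y).
      by apply/negP => h; move/negP: npy; apply; apply: subset_trans pr h.
    have nyr : ~~ (y \subset r).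
      by apply/negP => h; move/negP: nsr; apply; apply: subset_trans Zy h.
    apply: (noN NF pF qF rF yF); apply: mkN => //.
    + exact: prop2.
    + exact: prop2.
    + by apply: (proper_sub_trans _ Zy); apply: prop2.
  exact: (noN NF (inU1 hp npZ) (inU1 hq nqZ) (inU1 hr nrZ) (inU1 hs nsZ) Hi2).
Qed.
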